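(* Let $H$ be a separable infinite-dimensional Hilbert space and let $\mathcal{T}\subseteq B_1$. Suppose there exist an orthonormal basis $\{e_n\}_{n\in\mathbb{N}}$ of $H$ and $K\in\mathbb{N}\cup\{0\}$ such that for every $N\in\mathbb{N}$, every $T\in\mathcal{T}$ and every $h$ in the closed linear span of $\{e_{N+K},e_{N+K+1},\dots\}$, the vector $Th$ is orthogonal to $\mathrm{span}\{e_1,\dots,e_N\}$. Then $\mathcal{T}$ is UEC on $H_1$.
   Context: $H_1$ is the closed unit ball of $H$ and $B_1$ the closed unit ball of $B(H)$. $H_1$ carries the weak uniformity, i.e. the one induced by the metric $\rho(x,y)=\sum_{i\ge1}2^{-i}|\langle x-y,h_i\rangle|$ for a dense sequence $(h_i)$ in $H_1$. A family $\mathcal{F}$ of maps $H_1\to H_1$ is uniformly equicontinuous (UEC) if for every $\epsilon>0$ there is $\delta>0$ such that $\rho(x,y)<\delta$ implies $\rho(f(x),f(y))<\epsilon$ for all $f\in\mathcal{F}$ and $x,y\in H_1$. *)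

(* Defs.v *)
From Stdlib Require Import Reals List ClassicalEpsilon.
Open Scope R_scope.

Record C : Type := mkC { Re : R; Im : R }.
Definition C0 : C := mkC 0 0.
Definition C1 : C := mkC 1 0.
Definition Cadd (a b : C) : C := mkC (Re a + Re b) (Im a + Im b).
Definition Cmul (a b : C) : C :=
  mkC (Re a * Re b - Im a * Im b) (Re a * Im b + Im a * Re b).
Definition Cconj (a : C) : C := mkC (Re a) (- Im a).
Definition Cmod (a : C) : R := sqrt (Re a * Re a + Im a * Im a).

Record Hilbert : Type := {
  carrier :> Type;
  vadd : carrier -> carrier -> carrier;
  vzero : carrier;
  vopp : carrier -> carrier;
  vscal : C -> carrier -> carrier;
  inner : carrier -> carrier -> C;
  vadd_assoc : forall x y z, vadd x (vadd y z) = vadd (vadd x y) z;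
  vadd_comm : forall x y, vadd x y = vadd y x;
  vadd_0 : forall x, vadd x vzero = x;
  vadd_opp : forall x, vadd x (vopp x) = vzero;
  vscal_1 : forall x, vscal C1 x = x;
  vscal_mul : forall a b x, vscal a (vscal b x) = vscal (Cmul a b) x;
  vscal_dist_v : forall a x y, vscal a (vadd x y) = vadd (vscal a x) (vscal a y);
  vscal_dist_s : forall a b x, vscal (Cadd a b) x = vadd (vscal a x) (vscal b x);
  inner_add_l : forall x y z, inner (vadd x y) z = Cadd (inner x z) (inner y z);
  inner_scal_l : forall a x z, inner (vscal a x) z = Cmul a (inner x z);
  inner_conj : forall x y, inner y x = Cconj (inner x y);
  inner_pos : forall x, 0 <= Re (inner x x);
  inner_def : forall x, Re (inner x x) = 0 -> x = vzero;
  complete : forall u : nat -> carrier,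
    (forall eps, eps > 0 -> exists N, forall n m, (n >= N)%nat -> (m >= N)%nat ->
        sqrt (Re (inner (vadd (u n) (vopp (u m))) (vadd (u n) (vopp (u m))))) < eps) ->
    exists l, forall eps, eps > 0 -> exists N, forall n, (n >= N)%nat ->
        sqrt (Re (inner (vadd (u n) (vopp l)) (vadd (u n) (vopp l)))) < eps
}.

Arguments vadd {h}. Arguments vzero {h}. Arguments vopp {h}.
Arguments vscal {h}. Arguments inner {h}.

Section HilbertDefs.
Context {H : Hilbert}.

Definition vsub (x y : H) : H := vadd x (vopp y).
Definition norm (x : H) : R := sqrt (Re (inner x x)).

Definition in_ball1 (x : H) : Prop := norm x <= 1.

Inductive in_span (S : H -> Prop) : H -> Prop :=
  | span_zero : in_span S vzero
  | span_gen : forall x, S x -> in_span S x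
  | span_add : forall x y, in_span S x -> in_span S y -> in_span S (vadd x y)
  | span_scal : forall a x, in_span S x -> in_span S (vscal a x).

Definition in_clspan (S : H -> Prop) (v : H) : Prop :=
  forall eps, eps > 0 -> exists w, in_span S w /\ norm (vsub v w) < eps.

Definition separable : Prop :=
  exists d : nat -> H, forall x eps, eps > 0 -> exists n, norm (vsub x (d n)) < eps.

Definition finite_dimensional : Prop :=
  exists l : list H, forall v, in_span (fun x => In x l) v.

Definition orthonormal_basis (e : nat -> H) : Prop :=
  (forall i j, inner (e i) (e j) = if Nat.eqb i j then C1 else C0) /\
  (forall v, in_clspan (fun x => exists n, x = e n) v).

Definition linear_op (T : H -> H) : Prop :=
  (forall x y, T (vadd x y) = vadd (T x) (T y)) /\
  (forall a x, T (vscal a x) = vscal a (T x)).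

Definition in_B1 (T : H -> H) : Prop :=
  linear_op T /\ forall x, norm (T x) <= norm x.

Definition dense_seq_ball1 (hs : nat -> H) : Prop :=
  (forall i, in_ball1 (hs i)) /\
  (forall x eps, in_ball1 x -> eps > 0 -> exists i, norm (vsub x (hs i)) < eps).

(* rho(x,y) = sum_{i>=1} 2^{-i} |<x-y, h_i>|  (h_i = hs (i-1)) *)
Definition rho_terms (hs : nat -> H) (x y : H) (i : nat) : R :=
  (/ 2) ^ (S i) * Cmod (inner (vsub x y) (hs i)).

Definition rho (hs : nat -> H) (x y : H) : R :=
  epsilon (inhabits 0) (fun r => infinite_sum (rho_terms hs x y) r).

Definition UEC (hs : nat -> H) (F : (H -> H) -> Prop) : Prop :=
  forall eps, eps > 0 -> exists delta, delta > 0 /\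
    forall f, F f -> forall x y, in_ball1 x -> in_ball1 y ->
      rho hs x y < delta -> rho hs (f x) (f y) < eps.

End HilbertDefs.

(* Main.v *)
Require Import Defs.
From Stdlib Require Import Reals List ClassicalEpsilon Lra Lia Psatz.
Open Scope R_scope.

Lemma C_ext a b : Re a = Re b -> Im a = Im b -> a = b.
Proof. destruct a, b; simpl; intros; subst; reflexivity. Qed.

Lemma Cmod_nonneg a : 0 <= Cmod a.
Proof. apply sqrt_pos. Qed.

Lemma Cmod_C0 : Cmod C0 = 0.
Proof. unfold Cmod; simpl. replace (0*0+0*0) with 0 by ring. apply sqrt_0. Qed.

Lemma Cmod_sq a : Cmod a * Cmod a = Re a * Re a + Im a * Im a.
Proof. unfold Cmod. apply sqrt_sqrt. nra. Qed.

Lemma Cmod_triangle a b : Cmod (Cadd a b) <= Cmod a + Cmod b.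
Proof.
  pose proof (Cmod_sq a) as Ha. pose proof (Cmod_sq b) as Hb.
  pose proof (Cmod_nonneg a). pose proof (Cmod_nonneg b).
  destruct a as [a1 a2], b as [b1 b2]; simpl in *.
  set (u := Cmod {| Re := a1; Im := a2 |}) in *.
  set (v := Cmod {| Re := b1; Im := b2 |}) in *.
  clearbody u v.
  unfold Cmod; simpl.
  rewrite <- (sqrt_square (u+v)) by lra.
  apply sqrt_le_1_alt.
  assert (a1*b1+a2*b2 <= u*v).
  { assert ((a1*b1+a2*b2)*(a1*b1+a2*b2) <= (u*v)*(u*v)).
    { replace ((u*v)*(u*v)) with ((u*u)*(v*v)) by ring. rewrite Ha, Hb. pose proof (Rle_0_sqr (a1*b2 - a2*b1)); unfold Rsqr in *; nra. }
    destruct (Rle_lt_dec (a1*b1+a2*b2) (u*v)) as [|Hl]; auto. exfalso.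
    assert (0 <= u*v) by nra. nra. }
  nra.
Qed.

Lemma Cmod_opp a : Cmod (mkC (- Re a) (- Im a)) = Cmod a.
Proof. unfold Cmod; simpl. f_equal; ring. Qed.

Lemma Cmod_sub a c : Cmod a <= Cmod (Cadd a c) + Cmod c.
Proof.
  replace a with (Cadd (Cadd a c) (mkC (- Re c) (- Im c))) at 1.
  - eapply Rle_trans; [apply Cmod_triangle|]. rewrite Cmod_opp; lra.
  - apply C_ext; simpl; ring.
Qed.

Lemma Re_le_Cmod a : Re a <= Cmod a.
Proof.
  unfold Cmod. eapply Rle_trans; [apply Rle_abs|].
  rewrite <- sqrt_Rsqr_abs. apply sqrt_le_1_alt. unfold Rsqr. nra.
Qed.

Lemma Cmod_mul a b : Cmod (Cmul a b) = Cmod a * Cmod b.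
Proof.
  unfold Cmod. rewrite <- sqrt_mult by nra. f_equal. simpl. ring.
Qed.

Lemma Cmod_conj a : Cmod (Cconj a) = Cmod a.
Proof. unfold Cmod; simpl. f_equal; ring. Qed.

Section Vec.
Context {H : Hilbert}.
Implicit Types x y z u : H.

Lemma vadd_0_l x : vadd vzero x = x.
Proof. rewrite vadd_comm. apply vadd_0. Qed.

Lemma vadd_self_zero u : vadd u u = u -> u = vzero.
Proof.
  intro Hu. rewrite <- (vadd_opp _ u). rewrite <- Hu at 2.
  rewrite <- vadd_assoc, vadd_opp, vadd_0. reflexivity.
Qed.

Lemma vscal_C0 x : vscal C0 x = vzero.
Proof.
  apply vadd_self_zero. rewrite <- vscal_dist_s. f_equal. apply C_ext; simpl; ring.
Qed.

Lemma vscal_zero a : vscal a (@vzero H) = vzero.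
Proof.
  apply vadd_self_zero. rewrite <- vscal_dist_v. rewrite vadd_0. reflexivity.
Qed.

Lemma opp_unique x y : vadd x y = vzero -> y = vopp x.
Proof.
  intro E. rewrite <- (vadd_0 _ y). rewrite <- (vadd_opp _ x).
  rewrite vadd_assoc. rewrite (vadd_comm _ y x), E. apply vadd_0_l.
Qed.

Lemma vopp_scal x : vopp x = vscal (mkC (-1) 0) x.
Proof.
  symmetry. apply opp_unique. rewrite <- (vscal_1 _ x) at 1.
  rewrite <- vscal_dist_s. replace (Cadd Defs.C1 (mkC (-1) 0)) with C0.
  apply vscal_C0. apply C_ext; simpl; ring.
Qed.

Lemma vsub_add x y : vadd y (vsub x y) = x.
Proof.
  unfold vsub. rewrite vadd_assoc, (vadd_comm _ y x), <- vadd_assoc, vadd_opp.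
  apply vadd_0.
Qed.

Lemma Cconj_conj a : Cconj (Cconj a) = a.
Proof. apply C_ext; simpl; ring. Qed.

Lemma inner_add_r x y z : inner x (vadd y z) = Cadd (inner x y) (inner x z).
Proof.
  rewrite inner_conj, inner_add_l. rewrite (inner_conj _ y x), (inner_conj _ z x).
  apply C_ext; simpl; ring.
Qed.

Lemma inner_scal_r a x y : inner x (vscal a y) = Cmul (Cconj a) (inner x y).
Proof.
  rewrite inner_conj, inner_scal_l. rewrite (inner_conj _ y x).
  apply C_ext; simpl; ring.
Qed.

Lemma inner_zero_l y : inner vzero y = C0.
Proof.
  rewrite <- (vscal_C0 y). rewrite inner_scal_l. apply C_ext; simpl; ring.
Qed.

Lemma inner_zero_r y : inner y vzero = C0.
Proof.
  rewrite inner_conj, inner_zero_l. apply C_ext; simpl; ring.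
Qed.

Lemma inner_im0 x : Im (inner x x) = 0.
Proof.
  pose proof (inner_conj _ x x) as E. apply (f_equal Im) in E. simpl in E. lra.
Qed.

Lemma Re_inner_add x y :
  Re (inner (vadd x y) (vadd x y)) = Re (inner x x) + 2 * Re (inner x y) + Re (inner y y).
Proof.
  rewrite inner_add_l, !inner_add_r. rewrite (inner_conj _ y x). simpl. ring.
Qed.

Lemma Re_inner_scal a y :
  Re (inner (vscal a y) (vscal a y)) = (Re a * Re a + Im a * Im a) * Re (inner y y).
Proof.
  rewrite inner_scal_l, inner_scal_r. pose proof (inner_im0 y).
  destruct (inner y y). simpl in *. subst. ring.
Qed.

Lemma norm_nonneg x : 0 <= norm x.
Proof. apply sqrt_pos. Qed.

Lemma norm_sq x : norm x * norm x = Re (inner x x).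
Proof. apply sqrt_sqrt. apply inner_pos. Qed.

Lemma cauchy_schwarz x y : Cmod (inner x y) <= norm x * norm y.
Proof.
  set (p := Re (inner x x)). set (q := Re (inner y y)).
  assert (Hp : 0 <= p) by apply inner_pos. assert (Hq : 0 <= q) by apply inner_pos.
  set (ar := Re (inner x y)). set (ai := Im (inner x y)).
  set (A := ar*ar + ai*ai).
  assert (Ht : forall t, 0 <= p - 2 * t * A + t * t * A * q).
  { intro t. pose proof (inner_pos _ (vadd x (vscal (mkC (-t*ar) (-t*ai)) y))) as P.
    rewrite Re_inner_add, Re_inner_scal, inner_scal_r in P. simpl in P.
    fold p q ar ai in P. unfold A. nra. }
  assert (HA : A <= p * q).
  { destruct (Rle_lt_dec q 0) as [Hq0|Hq0].
    - assert (Eq0 : q = 0) by lra. rewrite Eq0 in Ht.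
      destruct (Rle_lt_dec A 0). nra.
      specialize (Ht ((p+1)/(2*A))). exfalso.
      replace (2 * ((p+1)/(2*A)) * A) with (p+1) in Ht by (field; lra). lra.
    - specialize (Ht (/q)).
      assert (q * /q = 1) by (field; lra).
      assert (0 <= p - A / q) by (unfold Rdiv; nra).
      assert (0 <= q * (p - A/q)) by nra.
      replace (q * (p - A/q)) with (q*p - A) in * by (field; lra). nra. }
  unfold Cmod, norm. rewrite <- sqrt_mult by auto. apply sqrt_le_1_alt. exact HA.
Qed.

Lemma norm_triangle x y : norm (vadd x y) <= norm x + norm y.
Proof.
  unfold norm at 1. rewrite Re_inner_add.
  pose proof (cauchy_schwarz x y). pose proof (Re_le_Cmod (inner x y)).
  pose proof (norm_sq x). pose proof (norm_sq y). pose proof (norm_nonneg x). pose proof (norm_nonneg y).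
  rewrite <- (sqrt_square (norm x + norm y)) by lra.
  apply sqrt_le_1_alt. nra.
Qed.

Lemma norm_scal a x : norm (vscal a x) = Cmod a * norm x.
Proof.
  unfold norm. rewrite Re_inner_scal. unfold Cmod. apply sqrt_mult. nra. apply inner_pos.
Qed.

Lemma norm_opp x : norm (vopp x) = norm x.
Proof.
  rewrite vopp_scal, norm_scal. unfold Cmod; simpl.
  replace (-1 * -1 + 0 * 0) with 1 by ring. rewrite sqrt_1. ring.
Qed.

Lemma norm_sub_le x y : norm (vsub x y) <= norm x + norm y.
Proof. unfold vsub. rewrite <- (norm_opp y). apply norm_triangle. Qed.

Lemma norm_zero : norm (@vzero H) = 0.
Proof. unfold norm. rewrite inner_zero_l. simpl. apply sqrt_0. Qed.

End Vec.

Fixpoint rsum (g : nat -> R) (n : nat) : R :=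
  match n with O => 0 | S n => rsum g n + g n end.

Lemma rsum_le g b n : (forall k, (k < n)%nat -> g k <= b) -> rsum g n <= INR n * b.
Proof.
  induction n; intros Hg; cbn [rsum]. simpl INR. lra.
  rewrite S_INR. assert (rsum g n <= INR n * b) by (apply IHn; intros; apply Hg; lia).
  assert (g n <= b) by (apply Hg; lia). lra.
Qed.

Lemma rsum_mono g g' n : (forall k, (k < n)%nat -> g k <= g' k) -> rsum g n <= rsum g' n.
Proof.
  induction n; intros Hg; simpl. lra.
  assert (rsum g n <= rsum g' n) by (apply IHn; intros; apply Hg; lia).
  assert (g n <= g' n) by (apply Hg; lia). lra.
Qed.

Section Span.
Context {H : Hilbert}.

Fixpoint vsum (f : nat -> H) (n : nat) : H :=
  match n with O => vzero | S n => vadd (vsum f n) (f n) end.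

Lemma vsum_ext f g n : (forall k, (k < n)%nat -> f k = g k) -> vsum f n = vsum g n.
Proof.
  induction n; intros E; simpl. reflexivity.
  rewrite IHn by (intros; apply E; lia). rewrite E by lia. reflexivity.
Qed.

Lemma vadd_swap4 (a b c d : H) : vadd (vadd a b) (vadd c d) = vadd (vadd a c) (vadd b d).
Proof.
  rewrite <- !vadd_assoc. f_equal. rewrite !vadd_assoc. f_equal. apply vadd_comm.
Qed.

Lemma vsum_add f g n : vsum (fun k => vadd (f k) (g k)) n = vadd (vsum f n) (vsum g n).
Proof.
  induction n; simpl. rewrite vadd_0. reflexivity.
  rewrite IHn. apply vadd_swap4.
Qed.

Lemma vsum_scal a f n : vsum (fun k => vscal a (f k)) n = vscal a (vsum f n).
Proof.
  induction n; simpl. rewrite vscal_zero. reflexivity.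
  rewrite IHn, vscal_dist_v. reflexivity.
Qed.

Lemma norm_vsum f n : norm (vsum f n) <= rsum (fun k => norm (f k)) n.
Proof.
  induction n; simpl. rewrite norm_zero. lra.
  eapply Rle_trans. apply norm_triangle. lra.
Qed.

Definition allE (e : nat -> H) := fun x : H => exists n, x = e n.
Definition lowE (e : nat -> H) M := fun x : H => exists j, (j < M)%nat /\ x = e j.
Definition highE (e : nat -> H) M := fun x : H => exists m, (M <= m)%nat /\ x = e m.

Lemma span_mono (S S' : H -> Prop) w :
  (forall x, S x -> S' x) -> in_span S w -> in_span S' w.
Proof.
  intros HS Hw. induction Hw.
  - apply span_zero.
  - apply span_gen. auto.
  - apply span_add; auto.
  - apply span_scal; auto.
Qed.

Lemma span_in_clspan (S : H -> Prop) w : in_span S w -> in_clspan S w.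
Proof.
  intros Hw eps Heps. exists w. split; auto.
  unfold vsub. rewrite vadd_opp, norm_zero. lra.
Qed.

Lemma span_bound e w : in_span (allE e) w -> exists N, in_span (lowE e N) w.
Proof.
  intros Hw. induction Hw.
  - exists O. apply span_zero.
  - destruct H0 as [n ->]. exists (S n). apply span_gen. exists n. split; auto.
  - destruct IHHw1 as [N1 H1], IHHw2 as [N2 H2]. exists (Nat.max N1 N2).
    apply span_add.
    + eapply span_mono; [|exact H1]. intros z [j [Hj ->]]. exists j; split; auto. lia.
    + eapply span_mono; [|exact H2]. intros z [j [Hj ->]]. exists j; split; auto. lia.
  - destruct IHHw as [N1 H1]. exists N1. apply span_scal; auto.
Qed.

Lemma span_split e M w : in_span (allE e) w ->
  exists lo hi, w = vadd lo hi /\ in_span (lowE e M) lo /\ in_span (highE e M) hi.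
Proof.
  intros Hw. induction Hw.
  - exists vzero, vzero. split; [rewrite vadd_0; auto|split; apply span_zero].
  - destruct H0 as [n ->]. destruct (Nat.lt_ge_cases n M).
    + exists (e n), vzero. split; [rewrite vadd_0; auto|split].
      apply span_gen; exists n; auto. apply span_zero.
    + exists vzero, (e n). split; [rewrite vadd_0_l; auto|split].
      apply span_zero. apply span_gen; exists n; auto.
  - destruct IHHw1 as [l1 [h1 [E1 [L1 G1]]]], IHHw2 as [l2 [h2 [E2 [L2 G2]]]].
    exists (vadd l1 l2), (vadd h1 h2). split; [|split; apply span_add; auto].
    subst. apply vadd_swap4.
  - destruct IHHw as [l1 [h1 [E1 [L1 G1]]]]. exists (vscal a l1), (vscal a h1).
    split; [|split; apply span_scal; auto]. subst. apply vscal_dist_v.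
Qed.

Lemma high_orth e M hi k :
  (forall i j, inner (e i) (e j) = if Nat.eqb i j then Defs.C1 else C0) ->
  in_span (highE e M) hi -> (k < M)%nat -> inner hi (e k) = C0.
Proof.
  intros On Hh Hk. induction Hh.
  - apply inner_zero_l.
  - destruct H0 as [m [Hm ->]]. rewrite On. destruct (Nat.eqb_spec m k). lia. auto.
  - rewrite inner_add_l, IHHh1, IHHh2. apply C_ext; simpl; ring.
  - rewrite inner_scal_l, IHHh. apply C_ext; simpl; ring.
Qed.

Lemma delta_sum e j M :
  vsum (fun k => vscal (if Nat.eqb j k then Defs.C1 else C0) (e k)) M
  = if Nat.ltb j M then e j else vzero.
Proof.
  induction M; simpl. destruct j; reflexivity.
  rewrite IHM.
  destruct (Nat.eqb_spec j M); destruct (Nat.ltb_spec j M); destruct (Nat.ltb_spec j (S M));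
    try lia.
  - subst. rewrite vscal_1, vadd_0_l. reflexivity.
  - rewrite vscal_C0, vadd_0. reflexivity.
  - rewrite vscal_C0, vadd_0. reflexivity.
Qed.

Lemma low_repr e M u :
  (forall i j, inner (e i) (e j) = if Nat.eqb i j then Defs.C1 else C0) ->
  in_span (lowE e M) u -> u = vsum (fun k => vscal (inner u (e k)) (e k)) M.
Proof.
  intros On Hu. induction Hu.
  - symmetry. rewrite (vsum_ext _ (fun k => vzero)).
    + clear. induction M; simpl; auto. rewrite IHM, vadd_0. auto.
    + intros. rewrite inner_zero_l, vscal_C0. auto.
  - destruct H0 as [j [Hj ->]].
    rewrite (vsum_ext _ (fun k => vscal (if Nat.eqb j k then Defs.C1 else C0) (e k))).
    + rewrite delta_sum. destruct (Nat.ltb_spec j M); auto; lia.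
    + intros. rewrite On. auto.
  - rewrite (vsum_ext _ (fun k => vadd (vscal (inner x (e k)) (e k)) (vscal (inner y (e k)) (e k)))).
    + rewrite vsum_add, <- IHHu1, <- IHHu2. auto.
    + intros. rewrite inner_add_l, vscal_dist_s. auto.
  - rewrite (vsum_ext _ (fun k => vscal a (vscal (inner x (e k)) (e k)))).
    + rewrite vsum_scal, <- IHHu. auto.
    + intros. rewrite inner_scal_l, vscal_mul. auto.
Qed.

End Span.

Lemma lim_le U l B : Un_cv U l -> (forall n, U n <= B) -> l <= B.
Proof.
  intros Hc HB. destruct (Rle_lt_dec l B) as [|Hl]; auto. exfalso.
  destruct (Hc (l - B)) as [N HN]. lra.
  specialize (HN N (le_n N)). specialize (HB N). unfold R_dist in HN.
  pose proof (Rle_abs (l - U N)). rewrite Rabs_minus_sym in HN. lra.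
Qed.

Lemma term_le_partial f i : (forall n, 0 <= f n) -> f i <= sum_f_R0 f i.
Proof.
  intros Hf. destruct i; simpl. lra.
  pose proof (cond_pos_sum f i Hf). lra.
Qed.

Lemma geom_partial c n : sum_f_R0 (fun i => (/2)^(S i) * c) n = c * (1 - (/2)^(S n)).
Proof.
  induction n. simpl. field. rewrite tech5, IHn. simpl. field.
Qed.

Lemma half_pow_pos n : 0 < (/2)^n.
Proof. apply pow_lt. lra. Qed.

Lemma half_pow_le1 n : (/2)^n <= 1.
Proof. induction n; simpl. lra. pose proof (half_pow_pos n). lra. Qed.

Section Rho.
Context {H : Hilbert}.
Variable hs : nat -> H.
Hypothesis Hhs : forall i, in_ball1 (hs i).

Lemma rho_terms_nonneg x y i : 0 <= rho_terms hs x y i.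
Proof.
  unfold rho_terms. apply Rmult_le_pos. left; apply half_pow_pos. apply Cmod_nonneg.
Qed.

Lemma rho_terms_le x y i : rho_terms hs x y i <= (/2)^(S i) * norm (vsub x y).
Proof.
  unfold rho_terms. apply Rmult_le_compat_l. left; apply half_pow_pos.
  eapply Rle_trans. apply cauchy_schwarz.
  pose proof (Hhs i). unfold in_ball1 in H0. pose proof (norm_nonneg (vsub x y)).
  pose proof (norm_nonneg (hs i)). nra.
Qed.

Lemma rho_spec x y : infinite_sum (rho_terms hs x y) (rho hs x y).
Proof.
  unfold rho. apply epsilon_spec.
  assert (Hg : Un_growing (sum_f_R0 (rho_terms hs x y))).
  { intro n. simpl. pose proof (rho_terms_nonneg x y (S n)). lra. }
  assert (Hb : has_ub (sum_f_R0 (rho_terms hs x y))).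
  { exists (norm (vsub x y)). intros r [n ->].
    eapply Rle_trans. apply sum_Rle. intros. apply rho_terms_le.
    rewrite geom_partial. pose proof (half_pow_pos (S n)).
    pose proof (norm_nonneg (vsub x y)).
    pose proof (half_pow_le1 (S n)).
    nra. }
  destruct (growing_cv _ Hg Hb) as [l Hl]. exists l. exact Hl.
Qed.

End Rho.

Section Rho2.
Context {H : Hilbert}.
Variable hs : nat -> H.
Hypothesis Hhs : forall i, in_ball1 (hs i).

Lemma rho_term_bound x y i :
  (/2)^(S i) * Cmod (inner (vsub x y) (hs i)) <= rho hs x y.
Proof.
  apply (Rle_trans _ (sum_f_R0 (rho_terms hs x y) i)).
  - apply (term_le_partial (rho_terms hs x y)). apply rho_terms_nonneg.
  - apply sum_incr. apply rho_spec; auto. apply rho_terms_nonneg.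
Qed.

Lemma rho_nonneg x y : 0 <= rho hs x y.
Proof.
  eapply Rle_trans; [|apply (rho_term_bound x y 0)].
  apply Rmult_le_pos. left; apply half_pow_pos. apply Cmod_nonneg.
Qed.

Lemma rho_coef_bound x y i :
  Cmod (inner (vsub x y) (hs i)) <= / ((/2)^(S i)) * rho hs x y.
Proof.
  pose proof (rho_term_bound x y i). pose proof (half_pow_pos (S i)).
  apply (Rmult_le_reg_l ((/2)^(S i))); auto.
  rewrite <- Rmult_assoc, Rinv_r by lra. lra.
Qed.

Lemma rho_le x y B : (forall n, sum_f_R0 (rho_terms hs x y) n <= B) -> rho hs x y <= B.
Proof. intros. eapply lim_le; eauto. apply rho_spec; auto. Qed.

End Rho2.

Section Main.
Context {H : Hilbert}.
Variable Tset : (H -> H) -> Prop.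
Variable e : nat -> H.
Variable K : nat.
Variable hs : nat -> H.
Hypothesis HB1 : forall T, Tset T -> in_B1 T.
Hypothesis On : forall i j, inner (e i) (e j) = if Nat.eqb i j then Defs.C1 else C0.
Hypothesis Sp : forall v, in_clspan (allE e) v.
Hypothesis Hyp : forall (N : nat), (1 <= N)%nat ->
     forall T, Tset T ->
     forall h, in_clspan (fun x => exists m, (N + K - 1 <= m)%nat /\ x = e m) h ->
     forall v, in_span (fun x => exists j, (j < N)%nat /\ x = e j) v ->
     inner (T h) v = C0.
Hypothesis Hhs : forall i, in_ball1 (hs i).
Hypothesis Hdense : forall x eps, in_ball1 x -> eps > 0 -> exists i, norm (vsub x (hs i)) < eps.

Lemma norm_e k : norm (e k) = 1.
Proof. unfold norm. rewrite On, Nat.eqb_refl. simpl. apply sqrt_1. Qed.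

Lemma ball_sub (x y : H) : in_ball1 x -> in_ball1 y -> norm (vsub x y) <= 2.
Proof. unfold in_ball1; intros. pose proof (norm_sub_le x y). lra. Qed.

Lemma inner_split_r (z a b : H) : inner z b = Cadd (inner z a) (inner z (vsub b a)).
Proof. rewrite <- inner_add_r, vsub_add. reflexivity. Qed.

Lemma coef_bound eta : eta > 0 -> forall M, exists C, C > 0 /\
  forall k, (k < M)%nat -> forall x y, in_ball1 x -> in_ball1 y ->
    Cmod (inner (vsub x y) (e k)) <= C * rho hs x y + 2 * eta.
Proof.
  intros Heta M. induction M.
  - exists 1. split. lra. intros; lia.
  - destruct IHM as [C1 [HC1 IH]].
    assert (Hb : in_ball1 (e M)) by (unfold in_ball1; rewrite norm_e; lra).
    destruct (Hdense (e M) eta Hb Heta) as [i Hi].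
    set (C2 := / ((/2)^(S i))).
    assert (HC2 : C2 > 0) by (apply Rinv_0_lt_compat, half_pow_pos).
    exists (C1 + C2). split. lra.
    intros k Hk x y Hx Hy. pose proof (rho_nonneg hs Hhs x y).
    destruct (Nat.eq_dec k M) as [->|Hne].
    + rewrite (inner_split_r _ (hs i)).
      eapply Rle_trans. apply Cmod_triangle.
      pose proof (rho_coef_bound hs Hhs x y i). fold C2 in H1.
      pose proof (cauchy_schwarz (vsub x y) (vsub (e M) (hs i))).
      pose proof (ball_sub x y Hx Hy). pose proof (norm_nonneg (vsub (e M) (hs i))).
      pose proof (norm_nonneg (vsub x y)).
      assert (norm (vsub x y) * norm (vsub (e M) (hs i)) <= 2 * eta) by nra.
      nra.
    + assert (k < M)%nat by lia. specialize (IH k H1 x y Hx Hy). nra.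
Qed.

Lemma keyL (g : H) eps : eps > 0 -> exists delta, delta > 0 /\
  forall T, Tset T -> forall x y, in_ball1 x -> in_ball1 y -> rho hs x y < delta ->
    Cmod (inner (T (vsub x y)) g) < eps.
Proof.
  intros Heps.
  destruct (Sp g (eps/8)) as [w0 [Hw0 Hgw0]]. lra.
  destruct (span_bound e w0 Hw0) as [N0 HN0].
  set (N := S N0).
  assert (HvN : in_span (lowE e N) w0).
  { eapply span_mono; [|exact HN0]. intros z [j [Hj ->]]. exists j. split; auto. unfold N; lia. }
  set (V := norm w0). assert (HV : 0 <= V) by apply norm_nonneg.
  set (M := (N + K - 1)%nat).
  assert (HM : 0 <= INR M) by apply pos_INR.
  set (eta := eps / (16 * (V+1) * (INR M + 1))).
  assert (Heta : eta > 0) by (unfold eta; apply Rdiv_lt_0_compat; nra).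
  destruct (coef_bound eta Heta M) as [C [HC HCb]].
  exists (eps / (8 * (V+1) * (INR M + 1) * C)). split.
  { apply Rdiv_lt_0_compat. lra. repeat apply Rmult_lt_0_compat; lra. }
  intros T HT x y Hx Hy Hrho.
  set (z := vsub x y).
  assert (Hz : norm z <= 2) by (apply ball_sub; auto).
  destruct (HB1 T HT) as [[Tadd Tscal] Tnorm].
  destruct (Sp z eta Heta) as [w [Hw Hzw]].
  destruct (span_split e M w Hw) as [lo [hi [Ew [Hlo Hhi]]]].
  rewrite (inner_split_r _ w0).
  assert (E1 : T z = vadd (vadd (T lo) (T hi)) (T (vsub z w))).
  { rewrite <- Tadd, <- Ew, <- Tadd, vsub_add. reflexivity. }
  assert (Ehi : inner (T hi) w0 = C0).
  { apply (Hyp N ltac:(unfold N; lia) T HT hi). apply span_in_clspan. exact Hhi. exact HvN. }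
  assert (B1 : Cmod (inner (T z) (vsub g w0)) <= 2 * (eps/8)).
  { eapply Rle_trans. apply cauchy_schwarz. pose proof (Tnorm z).
    pose proof (norm_nonneg (T z)). pose proof (norm_nonneg (vsub g w0)). nra. }
  assert (B2 : Cmod (inner (T (vsub z w)) w0) <= eta * V).
  { eapply Rle_trans. apply cauchy_schwarz. pose proof (Tnorm (vsub z w)).
    pose proof (norm_nonneg (T (vsub z w))). fold V. nra. }
  assert (Hcoef : forall k, (k < M)%nat ->
    Cmod (inner lo (e k)) <= C * rho hs x y + 3 * eta).
  { intros k Hk.
    assert (E2 : inner lo (e k) = inner w (e k)).
    { rewrite Ew, inner_add_l, (high_orth e M hi k On Hhi Hk). apply C_ext; simpl; ring. }
    rewrite E2.
    pose proof (Cmod_sub (inner w (e k)) (inner (vsub z w) (e k))) as Hs.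
    rewrite <- inner_add_l, vsub_add in Hs.
    pose proof (HCb k Hk x y Hx Hy). fold z in H0.
    pose proof (cauchy_schwarz (vsub z w) (e k)). rewrite norm_e in H1.
    lra. }
  assert (Hlo_norm : norm lo <= INR M * (C * rho hs x y + 3 * eta)).
  { rewrite (low_repr e M lo On Hlo) at 1.
    eapply Rle_trans. apply norm_vsum. apply rsum_le.
    intros k Hk. rewrite norm_scal, norm_e, Rmult_1_r. auto. }
  assert (B3 : Cmod (inner (T lo) w0) <= INR M * (C * rho hs x y + 3 * eta) * V).
  { eapply Rle_trans. apply cauchy_schwarz. pose proof (Tnorm lo).
    pose proof (norm_nonneg (T lo)). fold V. nra. }
  rewrite E1 in B1 |- *. rewrite inner_add_l, inner_add_l, Ehi.
  pose proof (rho_nonneg hs Hhs x y) as Hr0.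
  assert (A1 : V * (INR M * (C * rho hs x y)) <= eps / 8).
  { assert (C * rho hs x y <= eps / (8 * (V+1) * (INR M + 1))).
    { apply (Rmult_le_reg_l (/C)). apply Rinv_0_lt_compat; lra.
      rewrite <- Rmult_assoc, Rinv_l, Rmult_1_l by lra.
      replace (/ C * (eps / (8 * (V + 1) * (INR M + 1))))
        with (eps / (8 * (V + 1) * (INR M + 1) * C)) by (field; lra). lra. }
    assert (0 <= C * rho hs x y) by nra.
    apply (Rle_trans _ ((V+1) * (INR M + 1) * (C * rho hs x y))). nra.
    apply (Rle_trans _ ((V+1) * (INR M + 1) * (eps / (8 * (V+1) * (INR M + 1))))).
    apply Rmult_le_compat_l. nra. auto. right. field. lra. }
  assert (A2 : V * (INR M * (3 * eta)) + eta * V <= 3 * eps / 16).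
  { assert (eta * ((V+1) * (INR M + 1)) = eps / 16) by (unfold eta; field; lra).
    nra. }
  eapply Rle_lt_trans. apply Cmod_triangle.
  eapply Rle_lt_trans. apply Rplus_le_compat_r. apply Cmod_triangle.
  eapply Rle_lt_trans. apply Rplus_le_compat_r. apply Rplus_le_compat_r. apply Cmod_triangle.
  rewrite Cmod_C0. nra.
Qed.


Lemma delta_all eps : eps > 0 -> forall I, exists delta, delta > 0 /\
  forall i, (i < I)%nat -> forall T, Tset T -> forall x y, in_ball1 x -> in_ball1 y ->
    rho hs x y < delta -> Cmod (inner (T (vsub x y)) (hs i)) < eps.
Proof.
  intros Heps I. induction I.
  - exists 1. split. lra. intros; lia.
  - destruct IHI as [d1 [Hd1 IH]].
    destruct (keyL (hs I) eps Heps) as [d2 [Hd2 K2]].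
    exists (Rmin d1 d2). split. apply Rmin_pos; lra.
    intros i Hi T HT x y Hx Hy Hr.
    pose proof (Rmin_l d1 d2). pose proof (Rmin_r d1 d2).
    destruct (Nat.eq_dec i I) as [->|Hne].
    + apply K2; auto. lra.
    + apply IH; auto. lia. lra.
Qed.

Lemma T_sub T : linear_op T -> forall x y : H, T (vsub x y) = vsub (T x) (T y).
Proof.
  intros [Ta Ts] x y. unfold vsub. rewrite Ta, !vopp_scal, Ts. reflexivity.
Qed.

Lemma UEC_main : UEC hs Tset.
Proof.
  intros eps Heps.
  destruct (pow_lt_1_zero (/2) ltac:(rewrite Rabs_pos_eq; lra) (eps/4) ltac:(lra)) as [I HI].
  specialize (HI I (le_n I)). rewrite Rabs_pos_eq in HI by (left; apply half_pow_pos).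
  destruct (delta_all (eps/2) ltac:(lra) I) as [d [Hd Hall]].
  exists d. split. auto.
  intros T HT x y Hx Hy Hr.
  destruct (HB1 T HT) as [Tl Tn].
  assert (HTx : in_ball1 (T x)) by (unfold in_ball1 in *; pose proof (Tn x); lra).
  assert (HTy : in_ball1 (T y)) by (unfold in_ball1 in *; pose proof (Tn y); lra).
  set (f := rho_terms hs (T x) (T y)).
  assert (Fsmall : forall i, (i < I)%nat -> f i <= (/2)^(S i) * (eps/2)).
  { intros i Hi. unfold f, rho_terms. apply Rmult_le_compat_l. left; apply half_pow_pos.
    rewrite <- T_sub by auto. left. apply Hall; auto. }
  assert (Fall : forall i, f i <= (/2)^(S i) * 2).
  { intros i. unfold f. eapply Rle_trans. apply rho_terms_le; auto.
    apply Rmult_le_compat_l. left; apply half_pow_pos. apply ball_sub; auto. }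
  assert (Hsum : forall n, sum_f_R0 f n <=
     (eps/2) * (1 - (/2)^(S n)) + 2 * ((/2)^I - (/2)^(Nat.max (S n) I))).
  { induction n.
    - simpl sum_f_R0. destruct I as [|I'].
      + simpl Nat.max. pose proof (Fall 0%nat). simpl in *. lra.
      + rewrite Nat.max_r by lia. pose proof (Fsmall 0%nat ltac:(lia)). simpl in *. lra.
    - rewrite tech5.
      assert (E : (/2)^(S (S n)) = /2 * (/2)^(S n)) by reflexivity.
      pose proof (half_pow_pos (S n)).
      destruct (Nat.lt_ge_cases (S n) I).
      + rewrite Nat.max_r in IHn by lia. rewrite Nat.max_r by lia.
        pose proof (Fsmall (S n) H1). rewrite E in *. nra.
      + rewrite Nat.max_l in IHn by lia. rewrite Nat.max_l by lia.
        pose proof (Fall (S n)). rewrite E in *. nra. }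
  assert (Hle : rho hs (T x) (T y) <= eps/2 + 2 * (/2)^I).
  { apply rho_le; auto. intro n. eapply Rle_trans. apply Hsum.
    pose proof (half_pow_pos (S n)). pose proof (half_pow_pos (Nat.max (S n) I)). nra. }
  lra.
Qed.

End Main.

Theorem mainTheorem6 (H : Hilbert) (Tset : (H -> H) -> Prop) :
  separable (H := H) ->
  ~ finite_dimensional (H := H) ->
  (forall T, Tset T -> in_B1 T) ->
  (exists (e : nat -> H) (K : nat),
     orthonormal_basis e /\
     forall (N : nat), (1 <= N)%nat ->
     forall T, Tset T ->
     forall h, in_clspan (fun x => exists m, (N + K - 1 <= m)%nat /\ x = e m) h ->
     forall v, in_span (fun x => exists j, (j < N)%nat /\ x = e j) v ->
     inner (T h) v = C0) ->
  forall hs : nat -> H, dense_seq_ball1 hs ->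
    (forall T, Tset T -> forall x, in_ball1 x -> in_ball1 (T x)) /\
    UEC hs Tset.
Proof.
  intros Hsep Hnfd HB1 [e [K [[On Sp] Hyp]]] hs [Hhs Hdense].
  split.
  - intros T HT x Hx. destruct (HB1 T HT) as [_ Tn]. unfold in_ball1 in *.
    pose proof (Tn x). lra.
  - exact (UEC_main Tset e K hs HB1 On Sp Hyp Hhs Hdense).
Qed.
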